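(* Let $G^\dagger=(V^\dagger,E^\dagger)$ be a graph whose vertices are partitioned into blossom and non-blossom vertices, with weights $w^\dagger\in\mathbb{R}^{|E^\dagger|}$. Let $G^\ddagger=(V^\dagger,E^\ddagger)$ be obtained by duplicating every edge $e\in E^\dagger$ into two parallel edges $e_1,e_2$, with weights $w^\ddagger_{e_1}=w^\ddagger_{e_2}=w^\dagger_e$. Consider the LP: minimize $w^\ddagger\cdot x$ subject to $\sum_{e\in\delta(v)}x_e=2$ for every non-blossom $v\in V^\dagger$, $\sum_{e\in\delta(v)}x_e\ge 2$ for every blossom vertex $v\in V^\dagger$, $x\in[0,1]^{|E^\ddagger|}$ (here $\delta(v)$ is taken in $G^\ddagger$). Consider the graphical model on binary variables $x=[x_e]_{e\in E^\ddagger}\in\{0,1\}^{|E^\ddagger|}$, $$\Pr[X=x]\propto\prod_{e\in E^\ddagger}e^{-w^\ddagger_e x_e}\prod_{v\in V^\dagger}\psi_v(x_{\delta(v)}),$$ where $\psi_v(x_{\delta(v)})=1$ if $v$ is non-blossom and $\sum_{e\in\delta(v)}x_e=2$, or if $v$ is a blossom vertex and $\sum_{e\in\delta(v)}x_e\ge2$, and $\psi_v(x_{\delta(v)})=0$ otherwise. If the LP has a unique optimal solution $x^*$, then max-product belief propagation applied to this graphical model converges to $x^*$, i.e., its estimate $z^{BP}$ equals $x^*$ for all sufficiently many iterations.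
   Context: Max-product BP on a graphical model $\Pr[z]\propto\prod_i\psi_i(z_i)\prod_{\alpha\in F}\psi_\alpha(z_\alpha)$ with binary variables: for each variable $i$ let $F_i=\{\alpha\in F: i\in\alpha\}$. At iteration $t$ it maintains messages $m^t_{\alpha\to i}(c),m^t_{i\to\alpha}(c)$, $c\in\{0,1\}$, for $\alpha\in F_i$, updated by $m^{t+1}_{\alpha\to i}(c)=\max_{z_\alpha:z_i=c}\psi_\alpha(z_\alpha)\prod_{j\in\alpha\setminus i}m^t_{j\to\alpha}(z_j)$ and $m^{t+1}_{i\to\alpha}(c)=\psi_i(c)\prod_{\alpha'\in F_i\setminus\alpha}m^t_{\alpha'\to i}(c)$. Beliefs are $b_i[c]=\psi_i(c)\prod_{\alpha\in F_i}m_{\alpha\to i}(c)$ and the BP estimate is $z^{BP}_i=1$ if $b_i[1]>b_i[0]$, $0$ if $b_i[1]<b_i[0]$, and undetermined (''?'') if equal. Here the variables are the $x_e$, $\psi_e(c)=e^{-w^\ddagger_e c}$, and the factors are the $\psi_v$, $v\in V^\dagger$ (factor $v$ involves the variables $x_e$, $e\in\delta(v)$). *)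

(* Defs.v *)
From HB Require Import structures.
From mathcomp Require Import all_boot all_order all_algebra.
From mathcomp Require Import reals sequences exp.
Set Implicit Arguments. Unset Strict Implicit. Unset Printing Implicit Defensive.
Import Order.TTheory GRing.Theory Num.Theory.
Local Open Scope ring_scope.

Section BlossomBP.
Variables (R : realType) (V E : finType).
(* G^dagger: a simple graph; each edge e has a 2-element endpoint set. *)
Variable endpoints : E -> {set V}.
Variable blossom : pred V.
Variable w : E -> R.

(* E^ddagger: every edge e duplicated into (e,false), (e,true) *)
Definition Edd := (E * bool)%type.

Definition delta (v : V) : {set Edd} := [set i : Edd | v \in endpoints i.1].

Definition wdd (i : Edd) : R := w i.1.

Definition LP_feasible (x : {ffun Edd -> R}) : Prop :=
  (forall v, ~~ blossom v -> \sum_(i in delta v) x i = 2) /\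
  (forall v, blossom v -> 2 <= \sum_(i in delta v) x i) /\
  (forall i, 0 <= x i <= 1).

Definition LP_cost (x : {ffun Edd -> R}) : R := \sum_(i : Edd) wdd i * x i.

Definition LP_unique_opt (xs : {ffun Edd -> R}) : Prop :=
  LP_feasible xs /\
  (forall y, LP_feasible y -> LP_cost xs <= LP_cost y) /\
  (forall y, LP_feasible y -> LP_cost y = LP_cost xs -> y = xs).

Definition psiE (i : Edd) (c : bool) : R := expR (- (wdd i * (c%:R))).

(* vertex factors psi_v(x_{delta v}); depends only on z restricted to delta v *)
Definition psiV (v : V) (z : {ffun Edd -> bool}) : R :=
  let s := (\sum_(i in delta v) (z i : nat))%N in
  if blossom v then (2 <= s)%N%:R else (s == 2)%N%:R.

(* messages at iteration t:
   (factor v -> variable i, variable i -> factor v), all initialized to 1.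
   The max over z_alpha with z_i = c is taken over full assignments z, which
   is the same since the maximized expression only depends on z on delta v. *)
Fixpoint msgs (t : nat) :
  (V -> Edd -> bool -> R) * (Edd -> V -> bool -> R) :=
  match t with
  | 0 => (fun _ _ _ => 1, fun _ _ _ => 1)
  | t'.+1 =>
    let mf := (msgs t').1 in
    let mv := (msgs t').2 in
    (fun v i c =>
       \big[Num.max/0]_(z : {ffun Edd -> bool} | z i == c)
          (psiV v z * \prod_(j in delta v | j != i) mv j v (z j)),
     fun i v c =>
       psiE i c * \prod_(u in endpoints i.1 | u != v) mf u i c)
  end.

(* beliefs: F_i = the endpoints of the underlying edge *)
Definition belief (t : nat) (i : Edd) (c : bool) : R :=
  psiE i c * \prod_(v in endpoints i.1) (msgs t).1 v i c.

(* BP estimate: Some b, or None for "?" *)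
Definition zBP (t : nat) (i : Edd) : option bool :=
  if belief t i false < belief t i true then Some true
  else if belief t i true < belief t i false then Some false
  else None.

End BlossomBP.

(* Main.v *)
Require Import Defs.
From HB Require Import structures.
From mathcomp Require Import all_boot all_order all_algebra.
From mathcomp Require Import reals sequences exp.
From mathcomp Require Import ring lra zify.
From Stdlib Require Import Lia.
Import Order.TTheory GRing.Theory Num.Theory.
Set Implicit Arguments. Unset Strict Implicit. Unset Printing Implicit Defensive.
Local Open Scope ring_scope.
Section Pf.
Variables (R : realType) (V E : finType) (endpoints : E -> {set V})
  (blossom : pred V) (w : E -> R).
Hypothesis Hsimple : forall e, #|endpoints e| = 2%N.
Variable xs : {ffun Edd E -> R}.
Hypothesis Hopt : LP_unique_opt endpoints blossom w xs.

Local Notation Ed := (Edd E).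
Local Notation dl := (delta endpoints).
Local Notation feasible := (LP_feasible endpoints blossom).
Local Notation cost := (LP_cost w).

Lemma xs_feas : feasible xs. Proof. by case: Hopt. Qed.

Lemma cost_lt y : feasible y -> y != xs -> cost xs < cost y.
Proof.
case: Hopt => _ [Hle Hu] Fy Hne; rewrite lt_neqAle Hle // andbT.
apply/eqP => Heq; move/eqP: Hne; apply; exact: Hu.
Qed.

Lemma sum_eqj (P : pred Ed) (F : Ed -> R) j :
  \sum_(k | P k) F k * (k == j)%:R = (P j)%:R * F j.
Proof.
case: (boolP (P j)) => Hj.
  rewrite (bigD1 j) //= eqxx mulr1 big1 ?addr0 ?mul1r // => k /andP[_ /negbTE ->].
  by rewrite mulr0.
rewrite mul0r big1 // => k Hk; case: eqP => [Ek|]; last by rewrite mulr0.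
by move: Hk; rewrite Ek (negbTE Hj).
Qed.

Definition tw (k : Ed) : Ed := (k.1, ~~ k.2).
Lemma tw_neq k : (k == tw k) = false.
Proof. by case: k => e b; rewrite /tw /= xpair_eqE eqxx /=; case: b. Qed.

Definition pert j (b : R) : {ffun Ed -> R} :=
  [ffun k => xs k + b * ((k == j)%:R - (k == tw j)%:R)].

Lemma pert_sumF j b (P : pred Ed) (F : Ed -> R) :
  \sum_(k | P k) F k * pert j b k =
  \sum_(k | P k) F k * xs k + b * ((P j)%:R * F j - (P (tw j))%:R * F (tw j)).
Proof.
rewrite -!sum_eqj -sumrB mulr_sumr -big_split /=.
by apply: eq_bigr => k _; rewrite ffunE; ring.
Qed.

Lemma pert_feas j b : 0 <= xs j + b <= 1 -> 0 <= xs (tw j) - b <= 1 ->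
  feasible (pert j b).
Proof.
move=> H1 H2; case: xs_feas => Hnb [Hb Hbox].
have Hs v : \sum_(k in dl v) pert j b k = \sum_(k in dl v) xs k.
  have := pert_sumF j b (fun k => k \in dl v) (fun _ => 1).
  rewrite !inE /=.
  under eq_bigr do rewrite mul1r.
  under [X in _ = X + _ -> _]eq_bigr do rewrite mul1r.
  by move=> ->; rewrite !mulr1 subrr mulr0 addr0.
split; first by move=> v Hv; rewrite Hs; exact: Hnb.
split; first by move=> v Hv; rewrite Hs; exact: Hb.
move=> k; rewrite ffunE; have [->|Hkj] := eqVneq k j.
  by rewrite tw_neq mulr1n mulr0n subr0 mulr1.
have [->|Hkt] := eqVneq k (tw j).
  rewrite mulr1n mulr0n sub0r mulrN1; exact: H2.
by rewrite subrr mulr0 addr0; exact: Hbox.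
Qed.

Lemma pert_cost j b : cost (pert j b) = cost xs.
Proof.
rewrite /LP_cost (pert_sumF j b xpredT (wdd w)) /=.
by rewrite /wdd /tw /= subrr mulr0 addr0.
Qed.

Lemma pert_j j b : pert j b j = xs j + b.
Proof. by rewrite ffunE eqxx tw_neq subr0 mulr1. Qed.

Lemma pert_xs j b : 0 <= xs j + b <= 1 -> 0 <= xs (tw j) - b <= 1 -> b = 0.
Proof.
move=> H1 H2; have F := pert_feas H1 H2.
case: Hopt => _ [_ Hu]; have H := Hu _ F (pert_cost j b).
have := congr1 (fun f : {ffun Ed -> R} => f j) H; rewrite /= pert_j => /eqP.
by rewrite -subr_eq0 addrAC subrr add0r => /eqP.
Qed.

Lemma xs_tw j : xs (tw j) = xs j.
Proof.
case: xs_feas => _ [_ Hbox].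
have := @pert_xs j (xs (tw j) - xs j).
rewrite addrC subrK opprB addrC subrK => /(_ (Hbox _) (Hbox _)) /eqP.
by rewrite subr_eq0 => /eqP.
Qed.

Lemma xs01 j : xs j = 0 \/ xs j = 1.
Proof.
case: xs_feas => _ [_ Hbox]; have /andP[H0 H1] := Hbox j.
have Ht := xs_tw j.
case: (eqVneq (xs j) 0) => [|Hn0]; first by left.
case: (eqVneq (xs j) 1) => [|Hn1]; first by right.
have Hp : 0 < xs j by rewrite lt_neqAle eq_sym Hn0.
have Hq : xs j < 1 by rewrite lt_neqAle Hn1.
exfalso; have [Hle|Hlt] := lerP (xs j) (1 - xs j).
  have := @pert_xs j (xs j); rewrite Ht.
  move=> H; have : xs j = 0 by apply: H; apply/andP; split; lra.
  by move/eqP; rewrite (negbTE Hn0).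
have := @pert_xs j (1 - xs j); rewrite Ht.
move=> H; have : 1 - xs j = 0 by apply: H; apply/andP; split; lra.
move/eqP; rewrite subr_eq0 eq_sym (negbTE Hn1) //.
Qed.

Definition ab (k : Ed) : bool := xs k == 1.
Lemma xsE k : xs k = (ab k)%:R.
Proof. by rewrite /ab; case: (xs01 k) => ->; rewrite ?eqxx // eq_sym oner_eq0. Qed.

Definition Asum v : nat := (\sum_(k in dl v) ab k)%N.
Lemma sum_xs v : \sum_(k in dl v) xs k = (Asum v)%:R.
Proof. by rewrite natr_sum; apply: eq_bigr => k _; rewrite xsE. Qed.
Lemma Asum_nb v : ~~ blossom v -> Asum v = 2%N.
Proof.
case: xs_feas => Hnb _ Hv; have := Hnb v Hv; rewrite sum_xs => /eqP.
by rewrite -[2]/(2%:R) eqr_nat => /eqP.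
Qed.
Lemma Asum_b v : blossom v -> (2 <= Asum v)%N.
Proof.
case: xs_feas => _ [Hb _] Hv; have := Hb v Hv; rewrite sum_xs.
by rewrite -[2]/(2%:R) ler_nat.
Qed.

Definition D (b : bool) : R := if b then -1 else 1.
Definition s k := wdd w k * D (ab k).
Definition Bn (n : Ed -> nat) x := \sum_(k in dl x) (n k)%:R * D (ab k).

Lemma lemA (n : Ed -> nat) : (exists k, (0 < n k)%N) ->
  (forall x, ~~ blossom x -> Bn n x = 0) ->
  (forall x, blossom x -> 0 <= Bn n x \/ (-2 <= Bn n x /\ (3 <= Asum x)%N)) ->
  0 < \sum_k (n k)%:R * s k.
Proof.
move=> [k0 Hk0] HB1 HB2.
pose N := (\sum_k n k)%N.
pose eps : R := ((N + 2)%:R)^-1.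
have Heps : 0 < eps by rewrite invr_gt0 ltr0n addn2.
have HNe : eps * (N + 2)%:R = 1 by rewrite mulVf // pnatr_eq0 addn2.
have Heps2 : eps * 2 <= 1.
  by rewrite -[X in _ <= X]HNe ler_pM2l // ler_nat leq_addl.
have Hepsn k : 0 <= eps * (n k)%:R <= 1.
  apply/andP; split; first by rewrite mulr_ge0 // ltW.
  rewrite -[X in _ <= X]HNe ler_pM2l // ler_nat.
  apply: leq_trans (leq_addr _ _); rewrite /N (bigD1 k) //=; exact: leq_addr.
pose y : {ffun Ed -> R} := [ffun k => xs k + eps * ((n k)%:R * D (ab k))].
have Hsy x : \sum_(k in dl x) y k = (Asum x)%:R + eps * Bn n x.
  rewrite -sum_xs /Bn mulr_sumr -big_split /=.
  by apply: eq_bigr => k _; rewrite ffunE.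
have Fy : feasible y.
  split; first by move=> v Hv; rewrite Hsy HB1 // mulr0 addr0 Asum_nb.
  split.
    move=> v Hv; rewrite Hsy; have := Asum_b Hv; rewrite -(ler_nat R) => H2.
    case: (HB2 v Hv) => [HB|[HB H3]].
      have : 0 <= eps * Bn n v by rewrite mulr_ge0 // ltW.
      by move: H2; rewrite -[2]/(2%:R); lra.
    move: H3; rewrite -(ler_nat R) => H3.
    have : -2 * eps <= eps * Bn n v by rewrite mulrC ler_pM2l.
    by move: H3 Heps2; rewrite -[3]/(3%:R) -[2]/(2%:R); lra.
  move=> k; rewrite ffunE xsE /D; have := Hepsn k.
  by case: (ab k) => /=; rewrite ?mulrN1 ?mulr1 ?mulrN; lra.
have Hne : y != xs.
  apply/negP => /eqP H; have := congr1 (fun f : {ffun Ed -> R} => f k0) H; rewrite /= ffunE -[X in _ = X]addr0 => /addrI /eqP.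
  rewrite mulf_eq0 (negbTE (lt0r_neq0 Heps)) /= mulf_eq0.
  rewrite pnatr_eq0 eqn0Ngt Hk0 /D /=; by case: (ab k0); rewrite ?oppr_eq0 oner_eq0.
have := cost_lt Fy Hne.
have -> : cost y = cost xs + eps * \sum_k (n k)%:R * s k.
  rewrite /LP_cost mulr_sumr -big_split /=; apply: eq_bigr => k _.
  by rewrite ffunE /s; ring.
by rewrite ltrDl pmulr_rgt0.
Qed.

Local Notation mf t := (msgs endpoints blossom w t).1.
Local Notation mv t := (msgs endpoints blossom w t).2.
Local Notation psiV' := (psiV R endpoints blossom).
Local Notation zT := {ffun Ed -> bool}.

Lemma mfS t v i c : mf t.+1 v i c =
  \big[Num.max/0]_(z : zT | z i == c) (psiV' v z * \prod_(j in dl v | j != i) mv t j v (z j)).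
Proof. by []. Qed.
Lemma mvS t i v c : mv t.+1 i v c =
  psiE w i c * \prod_(u in endpoints i.1 | u != v) mf t u i c.
Proof. by []. Qed.
Lemma mf0 v i c : mf 0 v i c = 1. Proof. by []. Qed.
Lemma mv0 i v c : mv 0 i v c = 1. Proof. by []. Qed.

Lemma bigmax_ge0 (I : finType) (P : pred I) (F : I -> R) :
  0 <= \big[Num.max/0]_(i | P i) F i.
Proof. by apply: (big_rec (fun x => 0 <= x)) => // i x _ Hx; rewrite le_max Hx orbT. Qed.

Lemma bigmax_cases (I : finType) (P : pred I) (F : I -> R) :
  \big[Num.max/0]_(i | P i) F i = 0 \/
  exists2 i, P i & \big[Num.max/0]_(i | P i) F i = F i.
Proof.
apply: (big_ind (fun x => x = 0 \/ exists2 i, P i & x = F i)).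
- by left.
- by move=> x y Hx Hy; rewrite /Num.max; case: ifP.
- by move=> i Hi; right; exists i.
Qed.

Lemma le_bigmax (I : finType) (P : pred I) (F : I -> R) i0 :
  P i0 -> F i0 <= \big[Num.max/0]_(i | P i) F i.
Proof. by move=> H; rewrite (bigD1 i0) //= le_max lexx. Qed.

Lemma msg_ge0 t : (forall v i c, 0 <= mf t v i c) /\ (forall i v c, 0 <= mv t i v c).
Proof.
elim: t => [|t [IHf IHv]]; first by split=> *; rewrite ?mf0 ?mv0.
split=> *; first by rewrite mfS bigmax_ge0.
rewrite mvS mulr_ge0 ?prodr_ge0 // => *; exact/ltW/expR_gt0.
Qed.

Definition Sz (z : zT) v : nat := (\sum_(k in dl v) z k)%N.
Definition feas v (n : nat) : bool := if blossom v then (2 <= n)%N else n == 2%N.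
Lemma psiVE v z : psiV' v z = (feas v (Sz z v))%:R.
Proof. by rewrite /psiV /feas /Sz; case: (blossom v). Qed.

Definition zs : zT := [ffun k => ab k].
Lemma feas_zs v : feas v (Sz zs v).
Proof.
have -> : Sz zs v = Asum v by apply: eq_bigr => k _; rewrite ffunE.
rewrite /feas; case: (boolP (blossom v)) => Hv; first exact: Asum_b.
by rewrite Asum_nb.
Qed.

Lemma msg_pos t : (forall v i, 0 < mf t v i (ab i)) /\ (forall j v, 0 < mv t j v (ab j)).
Proof.
elim: t => [|t [IHf IHv]]; first by split=> *; rewrite ?mf0 ?mv0.
split=> *.
  rewrite mfS; apply: lt_le_trans (le_bigmax _ (i0 := zs) _); last by rewrite ffunE.
  rewrite psiVE feas_zs mul1r prodr_gt0 // => k _; rewrite ffunE; exact: IHv.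
rewrite mvS mulr_gt0 ?expR_gt0 // prodr_gt0 // => *; exact: IHf.
Qed.

Definition oth (j : Ed) v := odflt v [pick u in endpoints j.1 | u != v].

Lemma oth_spec j v : v \in endpoints j.1 ->
  endpoints j.1 = [set v; oth j v] /\ oth j v != v.
Proof.
move=> Hv; have /eqP /cards2P [x [y [xy Hs]]] := Hsimple j.1.
rewrite /oth; case: pickP => [u /andP [Hu Huv] | H] /=.
  split=> //; apply/eqP; rewrite eq_sym eqEcard; apply/andP; split.
    by apply/subsetP => z; rewrite !inE => /orP [] /eqP ->.
  by rewrite Hsimple cards2 eq_sym Huv.
exfalso; move: Hv; rewrite Hs !inE => /orP [] /eqP Ev.
  by have := H y; rewrite Hs !inE eqxx orbT Ev eq_sym xy.
by have := H x; rewrite Hs !inE eqxx Ev xy.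
Qed.

Lemma oth_in j v : v \in endpoints j.1 -> oth j v \in endpoints j.1.
Proof. by case/oth_spec => -> _; rewrite !inE eqxx orbT. Qed.

Lemma prod_oth j v (F : V -> R) : v \in endpoints j.1 ->
  \prod_(u in endpoints j.1 | u != v) F u = F (oth j v).
Proof.
case/oth_spec => -> Hne; apply: big_pred1 => u; rewrite /= !inE.
case: (eqVneq u v) => [->|] /=; last by rewrite andbT.
by rewrite eq_sym (negbTE Hne).
Qed.

Definition st := (V * bool)%type.
Fixpoint valid (q : st) (js : seq Ed) : bool :=
  if js is j :: js' then
    [&& q.1 \in endpoints j.1, ab j != q.2 & valid (oth j q.1, ab j) js']
  else true.
Fixpoint endst (q : st) (js : seq Ed) : st :=
  if js is j :: js' then endst (oth j q.1, ab j) js' else q.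
Definition val (js : seq Ed) := \sum_(j <- js) s j.
Definition stopok (q : st) := blossom q.1 && (~~ q.2 || (3 <= Asum q.1)%N).

Lemma valid_cat q js1 js2 :
  valid q (js1 ++ js2) = valid q js1 && valid (endst q js1) js2.
Proof. by elim: js1 q => //= j js IH q; rewrite IH !andbA. Qed.
Lemma endst_cat q js1 js2 : endst q (js1 ++ js2) = endst (endst q js1) js2.
Proof. by elim: js1 q => //= j js IH q; rewrite IH. Qed.
Lemma val_cat js1 js2 : val (js1 ++ js2) = val js1 + val js2.
Proof. by rewrite /val big_cat. Qed.
Lemma val_cons j js : val (j :: js) = s j + val js.
Proof. by rewrite /val big_cons. Qed.

Definition Bw (js : seq Ed) x := \sum_(j <- js) (x \in endpoints j.1)%:R * D (ab j).

Lemma Bw_cons j js x : Bw (j :: js) x = (x \in endpoints j.1)%:R * D (ab j) + Bw js x.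
Proof. by rewrite /Bw big_cons. Qed.
Lemma Bw_cat js1 js2 x : Bw (js1 ++ js2) x = Bw js1 x + Bw js2 x.
Proof. by rewrite /Bw big_cat. Qed.

Lemma DN b c : c != b -> D c = - D b.
Proof. by case: b; case: c => //= _; rewrite ?opprK. Qed.

Lemma in_ends j v x : v \in endpoints j.1 ->
  (x \in endpoints j.1)%:R = (x == v)%:R + (x == oth j v)%:R :> R.
Proof.
case/oth_spec => -> Hne; rewrite !inE.
case: (eqVneq x v) => [->|Hxv] /=; last by rewrite add0r.
by rewrite eq_sym (negbTE Hne) addr0.
Qed.

Lemma Bw_valid q js x : valid q js ->
  Bw js x = (x == (endst q js).1)%:R * D (endst q js).2 - (x == q.1)%:R * D q.2.
Proof.
elim: js q => [|j js IH] [v b] /=; first by rewrite /Bw big_nil subrr.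
case/and3P => Hv Hab Hval; rewrite Bw_cons (IH _ Hval) /= (in_ends _ Hv) (DN Hab).
ring.
Qed.

Lemma cnt_Bn js x : Bn (fun k => count_mem k js) x = Bw js x.
Proof.
elim: js => [|j js IH]; first by rewrite /Bn /Bw big_nil big1 // => k _; rewrite mul0r.
rewrite Bw_cons -IH /Bn.
rewrite (eq_bigr (fun k => D (ab k) * (k == j)%:R + (count_mem k js)%:R * D (ab k))); last first.
  by move=> k _; rewrite /= natrD mulrDl eq_sym [X in X + _ = _]mulrC.
by rewrite big_split /= (sum_eqj (fun k => k \in dl x)) !inE.
Qed.

Lemma cnt_val js : \sum_k (count_mem k js)%:R * s k = val js.
Proof.
elim: js => [|j js IH]; first by rewrite /val big_nil big1 // => k _; rewrite mul0r.
rewrite val_cons -IH.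
rewrite (eq_bigr (fun k => s k * (k == j)%:R + (count_mem k js)%:R * s k)); last first.
  by move=> k _; rewrite /= natrD mulrDl eq_sym [X in X + _ = _]mulrC.
by rewrite big_split /= (sum_eqj xpredT) mul1r.
Qed.

Definition upd (z : zT) k c : zT := [ffun m => if m == k then c else z m].

Lemma Sz_upd z k c v : k \in dl v -> (Sz (upd z k c) v + z k = Sz z v + c)%N.
Proof.
move=> Hk; rewrite /Sz (bigD1 k) //= [in RHS](bigD1 k) //= ffunE eqxx.
rewrite (eq_bigr (fun m => (z m : nat))); last by move=> m /andP [_ /negbTE Hm]; rewrite ffunE Hm.
ring.
Qed.

Lemma exists_gt (P : pred Ed) (f g : Ed -> bool) :
  (\sum_(k | P k) g k < \sum_(k | P k) f k)%N -> exists k, [&& P k, f k & ~~ g k].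
Proof.
case: (pickP [pred k | [&& P k, f k & ~~ g k]]) => [k Hk|H] Hlt; first by exists k.
exfalso; move: Hlt; rewrite ltnNge => /negP; apply; apply: leq_sum => k Hk.
by have := H k; rewrite /= Hk /=; case: (f k); case: (g k).
Qed.

Definition Rsum v i (f : Ed -> bool) := (\sum_(k in dl v | k != i) f k)%N.

Lemma exists_gtR v i (f g : Ed -> bool) :
  (Rsum v i g < Rsum v i f)%N -> exists k, [&& k \in dl v, k != i, f k & ~~ g k].
Proof. by move/exists_gt => [k /and3P [/andP [H1 H2] H3 H4]]; exists k; rewrite H1 H2 H3 H4. Qed.

Lemma local v i (z : zT) : i \in dl v -> z i = ~~ ab i -> feas v (Sz z v) ->
  (stopok (v, ab i) /\ feas v (Sz (upd z i (ab i)) v)) \/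
  exists j, [/\ j \in dl v, j != i, ab j != ab i, z j = ~~ ab j &
    feas v (Sz (upd (upd z i (ab i)) j (ab j)) v)].
Proof.
move=> Hi Hzi Hf.
have HS : Sz z v = (z i + Rsum v i z)%N by rewrite /Sz (bigD1 i).
have HA : Asum v = (ab i + Rsum v i ab)%N by rewrite /Asum (bigD1 i).
have HU := Sz_upd z (ab i) Hi.
have Hcont : forall j, j \in dl v -> j != i -> ab j != ab i -> z j = ~~ ab j ->
    feas v (Sz (upd (upd z i (ab i)) j (ab j)) v).
  move=> j Hj Hji Hab Hzj.
  have H2 := Sz_upd (upd z i (ab i)) (ab j) Hj.
  rewrite ffunE (negbTE Hji) Hzj in H2.
  suff -> : Sz (upd (upd z i (ab i)) j (ab j)) v = Sz z v by [].
  move: H2 HU; rewrite Hzi; move: Hab; case: (ab i); case: (ab j) => //= _; lia.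
have HAnb := @Asum_nb v; have HAb := @Asum_b v.
move: Hf; rewrite /feas /stopok /=.
case Ha: (ab i) Hzi HA HU Hcont => Hzi' HA' HU' Hcont'; rewrite Hzi' /= in HS HU' HA'.
- case: (boolP (blossom v && (3 <= Asum v)%N)) => [/andP[Hb H3]|Hn].
    rewrite Hb => Hf; left; split; first by rewrite ?Hb ?H3 ?orbT.
    by move: HU'; lia.
  move=> Hf; right.
  have HA2 : Asum v = 2%N.
    case: (boolP (blossom v)) => Hb; last exact: HAnb.
    by move: Hn (HAb Hb); rewrite Hb /=; lia.
  have Hlt : (Rsum v i ab < Rsum v i z)%N.
    by move: Hf HA' HS HA2; case: (blossom v) => /=; try lia.
  have [k /and4P [Hk Hki Hzk Habk]] := exists_gtR Hlt.
  exists k; split=> //; first by rewrite (negbTE Habk).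
    by rewrite Hzk (negbTE Habk).
  by apply: Hcont' => //; [rewrite (negbTE Habk) | rewrite Hzk (negbTE Habk)].
- case: (boolP (blossom v && (3 <= Sz z v)%N)) => [/andP[Hb H3]|Hn].
    rewrite Hb => Hf; left; split; first by rewrite ?Hb.
    by move: HU' H3; lia.
  move=> Hf; right.
  have HS2 : Sz z v = 2%N.
    move: Hf Hn; case: (blossom v) => /=; [lia | by move=> /eqP].
  have HA2 : (2 <= Asum v)%N.
    by case: (boolP (blossom v)) => Hb; [exact: HAb | rewrite HAnb].
  have Hlt : (Rsum v i z < Rsum v i ab)%N.
    by move: HA' HS HA2 HS2; lia.
  have [k /and4P [Hk Hki Habk Hzk]] := exists_gtR Hlt.
  exists k; split=> //; first by rewrite Habk.
    by rewrite (negbTE Hzk) Habk.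
  by apply: Hcont' => //; [rewrite Habk | rewrite (negbTE Hzk) Habk].
Qed.

Lemma psiE_ab j : psiE w j (ab j) = expR (s j) * psiE w j (~~ ab j).
Proof.
rewrite /psiE /s /D -expRD; congr expR; case: (ab j) => /=;
  rewrite ?mulr1n ?mulr0n; ring.
Qed.

Definition Fz t v i (z : zT) := psiV' v z * \prod_(j in dl v | j != i) mv t j v (z j).
Lemma mfS' t v i c : mf t.+1 v i c = \big[Num.max/0]_(z : zT | z i == c) Fz t v i z.
Proof. by []. Qed.

Definition Pt t := forall v i, v \in endpoints i.1 ->
  mf t v i (~~ ab i) = 0 \/ exists js, [/\ valid (v, ab i) js,
    stopok (endst (v, ab i) js) \/ size js = t./2 &
    expR (val js) * mf t v i (~~ ab i) <= mf t v i (ab i)].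
Definition Qt t := forall j v, v \in endpoints j.1 ->
  mv t j v (~~ ab j) = 0 \/ exists js, [/\ valid (v, ~~ ab j) js,
    stopok (endst (v, ~~ ab j) js) \/ size js = t.+1./2 &
    expR (val js) * mv t j v (~~ ab j) <= mv t j v (ab j)].

Lemma val_nil : val [::] = 0. Proof. by rewrite /val big_nil. Qed.

Lemma P0 : Pt 0.
Proof. by move=> v i _; right; exists [::]; split=> //; [right | rewrite val_nil expR0 mul1r]. Qed.
Lemma Q0 : Qt 0.
Proof. by move=> j v _; right; exists [::]; split=> //; [right | rewrite val_nil expR0 mul1r]. Qed.

Lemma QS t : Pt t -> Qt t.+1.
Proof.
move=> HP j v Hv; rewrite !mvS !(@prod_oth j v _ Hv).
have Ho := oth_in Hv.
case: (HP _ _ Ho) => [H0|[js [Hval Hend Hrat]]]; first by left; rewrite H0 mulr0.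
right; exists (j :: js); split.
- by rewrite /= Hv Hval; case: (ab j).
- by case: Hend => [Hs|Hs]; [left | right; rewrite /= Hs].
- rewrite val_cons expRD psiE_ab.
  have E1 : forall a b p m : R, a * b * (p * m) = (a * p) * (b * m) by move=> *; ring.
  rewrite E1 ler_wpM2l // mulr_ge0 ?expR_ge0 //; exact/ltW/expR_gt0.
Qed.

Lemma Fz_ge0 t v i z : 0 <= Fz t v i z.
Proof.
rewrite /Fz psiVE mulr_ge0 ?ler0n // prodr_ge0 // => *; exact: (proj2 (msg_ge0 t)).
Qed.

Lemma Mstep t : Qt t -> Pt t.+1.
Proof.
move=> HQ v i Hv.
have Hi : i \in dl v by rewrite inE.
rewrite !mfS'.
case: (bigmax_cases (fun z : zT => z i == ~~ ab i) (Fz t v i)) => [H0|[z /eqP Hzi Hz]].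
  by left.
rewrite Hz; case: (eqVneq (Fz t v i z) 0) => [Hz0|HzN]; first by left.
right.
have Hf : feas v (Sz z v).
  by move: HzN; rewrite /Fz psiVE; case: (feas v (Sz z v)) => //; rewrite mul0r eqxx.
case: (local Hi Hzi Hf) => [[Hst Hf']|[j [Hj Hji Hab Hzj Hf'']]].
- exists [::]; split => //; first by left.
  rewrite val_nil expR0 mul1r; apply: le_trans (le_bigmax _ (i0 := upd z i (ab i)) _);
    last by rewrite ffunE eqxx.
  rewrite /Fz !psiVE Hf Hf' le_eqVlt; apply/orP; left; apply/eqP; congr (_ * _).
  by apply: eq_bigr => k /andP [_ /negbTE Hk]; rewrite ffunE Hk.
- have Hvj : v \in endpoints j.1 by rewrite inE in Hj.
  have Ht : ~~ ab j = ab i by move: Hab; case: (ab j); case: (ab i).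
  pose Pr := \prod_(k | (k \in dl v) && (k != i) && (k != j)) mv t k v (z k).
  have E1 : Fz t v i z = mv t j v (~~ ab j) * Pr.
    by rewrite /Fz psiVE Hf mul1r (bigD1 j) /= ?Hj ?Hji // Hzj.
  have E2 : Fz t v i (upd (upd z i (ab i)) j (ab j)) = mv t j v (ab j) * Pr.
    rewrite /Fz psiVE Hf'' mul1r (bigD1 j) /= ?Hj ?Hji // ffunE eqxx; congr (_ * _).
    apply: eq_bigr => k /andP [/andP [_ /negbTE Hki] /negbTE Hkj].
    by rewrite !ffunE Hki Hkj.
  case: (HQ j v Hvj) => [Hm0|[js [Hval Hend Hrat]]].
    by move/eqP: HzN; rewrite E1 Hm0 mul0r.
  exists js; rewrite -Ht; split => //.
  apply: le_trans (le_bigmax _ (i0 := upd (upd z i (ab i)) j (ab j)) _); last first.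
    have Hij : (i == j) = false by rewrite eq_sym (negbTE Hji).
    by rewrite !ffunE Hij eqxx Ht.
  rewrite E1 E2 mulrA ler_wpM2r //.
  by rewrite /Pr prodr_ge0 // => *; exact: (proj2 (msg_ge0 t)).
Qed.

Lemma Pall t : Pt t.
Proof.
elim/ltn_ind: t => [[|t]] IH; first exact: P0.
apply: Mstep; case: t IH => [|t] IH; first exact: Q0.
by apply: QS; apply: IH.
Qed.

Definition Nst := #|{: V * bool}|.
Definition cyc (n : {ffun Ed -> 'I_Nst.+1}) : bool :=
  [forall x, Bn (fun k => n k : nat) x == 0] && [exists k, (0 < n k)%N].
Definition del0 : R := \big[Num.min/1]_(n : {ffun Ed -> 'I_Nst.+1} | cyc n)
  \sum_k ((n k : nat)%:R * s k).

Lemma del0_gt0 : 0 < del0.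
Proof.
apply: (big_ind (fun x => 0 < x)) => //.
  by move=> x y Hx Hy; rewrite /Num.min; case: ifP.
move=> n /andP [/forallP HB /existsP [k Hk]]; apply: (lemA (n := fun k => n k : nat)).
- by exists k.
- by move=> x _; apply/eqP; exact: HB.
- by move=> x _; left; rewrite (eqP (HB x)).
Qed.

Lemma del0_le n : cyc n -> del0 <= \sum_k ((n k : nat)%:R * s k).
Proof.
move=> Hn; rewrite /del0 (bigD1 n) //=; rewrite /Num.min; case: ifP => // /negbT.
by rewrite -leNgt.
Qed.

Lemma cyc_val q g : valid q g -> endst q g = q -> (0 < size g <= Nst)%N -> del0 <= val g.
Proof.
move=> Hv He /andP [Hs0 HsN].
pose n : {ffun Ed -> 'I_Nst.+1} := [ffun k => inord (count_mem k g)].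
have Hn k : (n k : nat) = count_mem k g.
  by rewrite ffunE inordK // ltnS (leq_trans (count_size _ _) HsN).
have Hc : cyc n.
  apply/andP; split.
    apply/forallP => x.
    rewrite (_ : Bn _ x = Bn (fun k => count_mem k g) x); last first.
      by apply: eq_bigr => k _; rewrite Hn.
    by rewrite cnt_Bn (Bw_valid x Hv) He subrr.
  have [j [g' Eg]] : exists j g', g = j :: g' by case: (g) Hs0 => // j g' _; exists j, g'.
  by apply/existsP; exists j; rewrite Hn Eg /= eqxx.
have := del0_le Hc; rewrite -cnt_val.
by rewrite (eq_bigr (fun k => (count_mem k g)%:R * s k)) // => k _; rewrite Hn.
Qed.

Definition Wm : R := \sum_k `|s k|.
Lemma Wm_ge0 : 0 <= Wm. Proof. exact: sumr_ge0. Qed.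
Lemma s_le k : `|s k| <= Wm.
Proof. by rewrite /Wm (bigD1 k) //= lerDl sumr_ge0. Qed.
Lemma val_lb js : - ((size js)%:R * Wm) <= val js.
Proof.
elim: js => [|j js IH]; first by rewrite val_nil mul0r oppr0.
rewrite val_cons /= -addn1 natrD mulrDl mul1r.
have := lerNnormlW (s_le j); lra.
Qed.

Definition cc : R := del0 / (Nst.+1)%:R.
Definition CC : R := Nst%:R * Wm + del0.
Lemma cc_gt0 : 0 < cc. Proof. by rewrite divr_gt0 ?del0_gt0 ?ltr0n. Qed.
Lemma CC_ge0 : 0 <= CC.
Proof. by rewrite addr_ge0 ?mulr_ge0 ?Wm_ge0 ?ler0n // ltW ?del0_gt0. Qed.
Lemma cg_le g : (g <= Nst.+1)%N -> cc * g%:R <= del0.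
Proof.
move=> Hg; rewrite /cc mulrAC ler_pdivrMr ?ltr0n //.
by rewrite ler_wpM2l ?ler_nat // ltW ?del0_gt0.
Qed.

Lemma dec L : forall q js, size js = L -> valid q js -> cc * L%:R - CC <= val js.
Proof.
elim/ltn_ind: L => L IH q js Hs Hv.
case: (ltnP L Nst) => HL.
  have H1 := val_lb js; have H2 := cg_le (leqW (ltnW HL)).
  have H3 : (size js)%:R * Wm <= Nst%:R * Wm.
    by rewrite ler_wpM2r ?Wm_ge0 // ler_nat Hs ltnW.
  by move: H1 H2 H3; rewrite /CC; lra.
pose f (m : 'I_Nst.+1) : V * bool := endst q (take m js).
have : ~~ injectiveb f.
  apply/negP => /injectiveP Hinj; have := leq_card f Hinj.
  by rewrite card_ord /Nst ltnn.
case/injectivePn => p [p' Hpp' Hf].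
have [a [b [Hab Hfab]]] : exists a b : 'I_Nst.+1, (a < b)%N /\ f a = f b.
  case: (ltngtP p p') => H; [by exists p, p' | by exists p', p |].
  by move/val_inj: H => H; rewrite H eqxx in Hpp'.
pose g := drop a (take b js).
have Hb : (b <= size js)%N by rewrite Hs; apply: leq_trans HL; rewrite -ltnS.
have Htk : take b js = take a js ++ g.
  by rewrite -{1}(cat_take_drop a (take b js)) take_takel // ltnW.
have Hjs : js = take a js ++ g ++ drop b js by rewrite catA -Htk cat_take_drop.
have Hg : endst (f a) g = f a.
  have : endst q (take a js ++ g) = f b by rewrite -Htk.
  by rewrite endst_cat -Hfab.
move: Hv; rewrite {1}Hjs !valid_cat -/(f a) Hg => /and3P [HvA Hvg HvD].
have Hv' : valid q (take a js ++ drop b js) by rewrite valid_cat -/(f a) HvA HvD.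
have Hsg : size g = (b - a)%N by rewrite /g size_drop size_takel.
have Hsz : size (take a js ++ drop b js) = (a + (L - b))%N.
  rewrite size_cat size_drop size_takel; first by rewrite Hs.
  exact: leq_trans (ltnW Hab) Hb.
have Hlt : (a + (L - b) < L)%N by move: Hab Hb; rewrite Hs; lia.
have H1 := IH _ Hlt q _ Hsz Hv'.
have H2 : del0 <= val g.
  apply: (cyc_val Hvg Hg); rewrite Hsg; apply/andP; split; first by rewrite subn_gt0.
  by apply: leq_trans (leq_subr _ _) _; rewrite -ltnS.
have H3 : cc * (b - a)%:R <= del0 by apply: cg_le; apply: leq_trans (leq_subr _ _) _; exact: ltnW.
have EL : cc * L%:R = cc * (a + (L - b))%:R + cc * (b - a)%:R.
  by rewrite -mulrDr -natrD; congr (_ * _%:R); move: Hab Hb; rewrite Hs; lia.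
have Hval : val js = val (take a js ++ drop b js) + val g.
  by rewrite {1}Hjs !val_cat; ring.
rewrite EL Hval; move: H1 H2 H3; lra.
Qed.

Lemma stop2 x e1 e2 : stopok e1 -> stopok e2 ->
  (~~ blossom x -> (x == e1.1)%:R * D e1.2 + (x == e2.1)%:R * D e2.2 = 0) /\
  (blossom x -> 0 <= (x == e1.1)%:R * D e1.2 + (x == e2.1)%:R * D e2.2 \/
     (-2 <= (x == e1.1)%:R * D e1.2 + (x == e2.1)%:R * D e2.2 /\ (3 <= Asum x)%N)).
Proof.
case: e1 e2 => [v1 b1] [v2 b2]; rewrite /stopok /= => /andP [Hb1 H1] /andP [Hb2 H2].
split.
  move=> Hx.
  have -> : (x == v1) = false by apply/eqP => Ex; rewrite Ex Hb1 in Hx.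
  have -> : (x == v2) = false by apply/eqP => Ex; rewrite Ex Hb2 in Hx.
  by rewrite !mul0r addr0.
move=> Hx; rewrite /D.
case: (eqVneq x v1) => [E1|N1]; case: (eqVneq x v2) => [E2|N2];
  case: b1 H1; case: b2 H2 => //= H2 H1; rewrite ?mulr1n ?mulr0n;
  try (left; lra); right; (split; [lra | ]);
  by [rewrite E1 | rewrite E2].
Qed.

Lemma Xpos i u Lu Lo : u \in endpoints i.1 ->
  valid (u, ab i) Lu -> valid (oth i u, ab i) Lo ->
  stopok (endst (u, ab i) Lu) -> stopok (endst (oth i u, ab i) Lo) ->
  0 < s i + val Lu + val Lo.
Proof.
move=> Hu HvU HvO SU SO.
have := @lemA (fun k => count_mem k (i :: Lu ++ Lo)).
rewrite cnt_val val_cons val_cat addrA; apply.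
  by exists i; rewrite /= eqxx.
all: move=> x.
all: have HB : Bn (fun k => count_mem k (i :: Lu ++ Lo)) x =
  (x == (endst (u, ab i) Lu).1)%:R * D (endst (u, ab i) Lu).2 +
  (x == (endst (oth i u, ab i) Lo).1)%:R * D (endst (oth i u, ab i) Lo).2
  by rewrite cnt_Bn Bw_cons Bw_cat (Bw_valid x HvU) (Bw_valid x HvO) (in_ends x Hu) /=; ring.
all: rewrite HB; have [S1 S2] := stop2 x SU SO; by [apply: S1 | apply: S2].
Qed.

Lemma main : exists T, forall t, (T <= t)%N -> forall i, exists b : bool,
  zBP endpoints blossom w t i = Some b /\ xs i = (b : nat)%:R.
Proof.
have Hc := cc_gt0; have HC := CC_ge0; have HW := Wm_ge0.
pose K := Num.Def.archi_bound ((2 * CC + Wm) / cc).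
have HK : (2 * CC + Wm) / cc < K%:R.
  by apply: archi_boundP; apply: divr_ge0; [lra | exact: ltW].
rewrite ltr_pdivrMr // in HK.
exists (K.*2) => t Ht i.
have HtK : (K <= t./2)%N by have := half_leq Ht; rewrite doubleK.
have HcK : cc * K%:R <= cc * (t./2)%:R.
  by apply: ler_wpM2l; [exact: ltW | rewrite ler_nat].
have /eqP /cards2P [u [y [uy Hs]]] := Hsimple i.1.
have Hu : u \in endpoints i.1 by rewrite Hs !inE eqxx.
have [Hends Hne] := oth_spec Hu.
have Ho := oth_in Hu.
have Hbel c : belief endpoints blossom w t i c =
    psiE w i c * (mf t u i c * mf t (oth i u) i c).
  rewrite /belief Hends big_setU1 ?big_set1 // !inE eq_sym; exact: Hne.
have Hpos : 0 < belief endpoints blossom w t i (ab i).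
  rewrite Hbel mulr_gt0 ?expR_gt0 // mulr_gt0 //; exact: (proj1 (msg_pos t)).
have Hge : 0 <= belief endpoints blossom w t i (~~ ab i).
  rewrite Hbel mulr_ge0 ?mulr_ge0 ?expR_ge0 //; exact: (proj1 (msg_ge0 t)).
have Htime : forall q1 q2 L1 L2, valid q1 L1 -> valid q2 L2 -> size L2 = t./2 ->
    0 < s i + val L1 + val L2.
  move=> q1 q2 L1 L2 H1 H2 H3.
  have D1 := dec (erefl (size L1)) H1; have D2 := dec H3 H2.
  have : 0 <= cc * (size L1)%:R by apply: mulr_ge0; [exact: ltW | exact: ler0n].
  have := lerNnormlW (s_le i).
  by move: HK HcK D1 D2; lra.
have Hlt : belief endpoints blossom w t i (~~ ab i) < belief endpoints blossom w t i (ab i).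
  case: (Pall t Hu) => [H0|[Lu [HvU HeU HrU]]].
    by rewrite [X in X < _]Hbel H0 mul0r mulr0.
  case: (Pall t Ho) => [H0|[Lo [HvO HeO HrO]]].
    by rewrite [X in X < _]Hbel H0 mulr0 mulr0.
  have HX : 0 < s i + val Lu + val Lo.
    case: HeU => [SU|SU]; case: HeO => [SO|SO].
    - exact: (Xpos Hu HvU HvO SU SO).
    - exact: Htime HvU HvO SO.
    - by rewrite addrAC; exact: Htime HvO HvU SU.
    - exact: Htime HvU HvO SO.
  have Hrat : expR (s i + val Lu + val Lo) * belief endpoints blossom w t i (~~ ab i)
      <= belief endpoints blossom w t i (ab i).
    rewrite !Hbel psiE_ab !expRD.
    have Hm := proj1 (msg_ge0 t).
    have E1 : forall a b c p m1 m2 : R,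
        a * b * c * (p * (m1 * m2)) = (a * p) * ((b * m1) * (c * m2)) by move=> *; ring.
    rewrite E1 ler_wpM2l ?mulr_ge0 ?expR_ge0 //.
    by rewrite ler_pM // mulr_ge0 ?expR_ge0.
  case: (eqVneq (belief endpoints blossom w t i (~~ ab i)) 0) => [->|Hn0] //.
  have Hp : 0 < belief endpoints blossom w t i (~~ ab i) by rewrite lt_neqAle eq_sym Hn0.
  apply: lt_le_trans Hrat; rewrite -[X in X < _]mul1r ltr_pM2r //.
  by rewrite expR_gt1.
exists (ab i); split; last exact: xsE.
rewrite /zBP; move: Hlt; case: (ab i) => /= Hlt; first by rewrite Hlt.
by rewrite (lt_gtF Hlt) Hlt.
Qed.
End Pf.

Theorem corollary1 (R : realType) (V E : finType)
  (endpoints : E -> {set V}) (blossom : pred V) (w : E -> R)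
  (Hsimple : forall e, #|endpoints e| = 2%N)
  (Hinj : injective endpoints)
  (xs : {ffun Edd E -> R}) :
  LP_unique_opt endpoints blossom w xs ->
  exists T : nat, forall t : nat, (T <= t)%N ->
    forall i : Edd E, exists b : bool,
      zBP endpoints blossom w t i = Some b /\ xs i = (b : nat)%:R.
Proof. move=> H; exact: (main Hsimple H). Qed.
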